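(* Let $d>1$ and let $s$ be an integer with $1<s<2^d$, written as $s=j\cdot 2^k$ with $j$ odd and $k\ge 1$. Then \[\lambda^*(d,s+1)\ge \frac1e\,(1-2^{-k})\quad\text{and}\quad \lambda^*(d,s-1)\ge\frac1e\,(1-2^{-k}).\]
   Context: For integers $n\ge d\ge 1$, a $d$-flat in $\mathbb{F}_2^n$ is a set $x_0+U$ with $x_0\in\mathbb{F}_2^n$ and $U$ a $d$-dimensional linear subspace of $\mathbb{F}_2^n$. For $A\subseteq\mathbb{F}_2^n$ and an integer $0\le s\le 2^d$, $\lambda^*(n,d,s,A)$ denotes the fraction of $d$-flats $Q$ in $\mathbb{F}_2^n$ with $|Q\cap A|=s$. Let $\lambda^*(n,d,s)=\max_{A\subseteq\mathbb{F}_2^n}\lambda^*(n,d,s,A)$; this is non-increasing in $n$, and $\lambda^*(d,s)=\lim_{n\to\infty}\lambda^*(n,d,s)$. *)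

(* Defs.v *)
From HB Require Import structures.
From mathcomp Require Import all_boot all_order all_algebra.
From mathcomp Require Import all_classical all_reals all_analysis.
Set Implicit Arguments. Unset Strict Implicit. Unset Printing Implicit Defensive.
Import Order.TTheory GRing.Theory Num.Theory.
Import numFieldNormedType.Exports.
Local Open Scope ring_scope.

Notation F2vec n := 'rV['F_2]_n.

(* Q is a d-flat of F_2^n: Q = x0 + U with U the row space of a row-free
   d x n matrix M (i.e. U a d-dimensional linear subspace). *)
Definition is_flat (n d : nat) (Q : {set F2vec n}) : bool :=
  [exists x0 : F2vec n, exists M : 'M['F_2]_(d, n),
     row_free M && (Q == [set x0 + v *m M | v : 'rV['F_2]_d])].

Definition flats (n d : nat) : {set {set F2vec n}} := [set Q | is_flat d Q].

Definition lam (R : realType) (n d s : nat) (A : {set F2vec n}) : R :=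
  #|[set Q in flats n d | #|Q :&: A| == s]|%:R / #|flats n d|%:R.

(* lambda^*(n,d,s) = max over A (all values are >= 0, so 0 is a neutral start) *)
Definition lamstar_n (R : realType) (n d s : nat) : R :=
  \big[Num.max/0]_(A : {set F2vec n}) lam R d s A.

Definition lamstar (R : realType) (d s : nat) : R :=
  limn ((fun n => lamstar_n R n d s) : R^nat).

(* Main.v *)
Require Import Defs.
From HB Require Import structures.
From mathcomp Require Import all_boot all_order all_algebra.
From mathcomp Require Import all_classical all_reals all_analysis.
From mathcomp Require Import ring.
Import Order.TTheory GRing.Theory Num.Theory.
Local Open Scope ring_scope.

Lemma fiber_count (X Y : finType) (f : X -> Y) (XS : {set X}) (YS : {set Y}) (K : nat) :
  (forall y, y \in YS -> #|[set x in XS | f x == y]| = K) ->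
  (forall x, x \in XS -> f x \in YS) ->
  forall P : pred Y, #|[set x in XS | P (f x)]| = (K * #|[set y in YS | P y]|)%N.
Proof.
move=> hK hf P.
rewrite -sum1_card (partition_big f (fun y => (y \in YS) && P y)) /=; last first.
  by move=> x; rewrite inE => /andP[xS Px]; rewrite hf.
rewrite mulnC -sum_nat_const; apply: eq_big => [y|y /andP[yS Py]]; first by rewrite inE.
rewrite -(hK y yS) -sum1_card; apply: eq_bigl => x; rewrite !inE.
by case: eqP => [->|]; rewrite ?Py ?andbT ?andbF.
Qed.

Lemma fiber_count_const (X Y : finType) (f : X -> Y) (XS : {set X}) (YS : {set Y}) :
  (forall y1 y2, y1 \in YS -> y2 \in YS ->
     #|[set x in XS | f x == y1]| <= #|[set x in XS | f x == y2]|)%N ->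
  (forall x, x \in XS -> f x \in YS) ->
  exists K, forall P : pred Y, #|[set x in XS | P (f x)]| = (K * #|[set y in YS | P y]|)%N.
Proof.
move=> hle hf.
have [y0 y0S|YS0] := pickP (mem YS).
  exists #|[set x in XS | f x == y0]|; apply: fiber_count => // y yS.
  by apply/eqP; rewrite eqn_leq !hle.
exists 0%N => P; rewrite mul0n; apply/eqP; rewrite cards_eq0; apply/eqP/setP => x.
rewrite !inE; apply/negbTE; apply/negP => /andP[xS _].
by have := YS0 (f x); rewrite /= hf.
Qed.

Lemma fiber_add (U V : finZmodType) (f : U -> V) :
  (forall a b, f (a - b) = f a - f b) ->
  forall u0, #|[set u | f u == f u0]| = #|[set u | f u == 0]|.
Proof.
move=> fB u0.
have -> : [set u | f u == f u0] = [set u + u0 | u in [set u | f u == 0]].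
  apply/setP => u; rewrite inE; apply/idP/imsetP => [/eqP fu|[v]].
    by exists (u - u0); rewrite ?addrNK // inE fB fu subrr.
  have f0 : f 0 = 0 by have := fB 0 0; rewrite subrr => ->; rewrite subrr.
  have fN a : f (- a) = - f a by rewrite -sub0r fB f0 sub0r.
  by rewrite inE => /eqP fv ->; rewrite -[u0]opprK fB fv fN opprK sub0r opprK.
by rewrite card_imset //; apply: addIr.
Qed.

Lemma ker_card (U V : finZmodType) (f : U -> V) :
  (forall a b, f (a - b) = f a - f b) -> (forall w, exists u, f u = w) ->
  (#|[set u | f u == 0%R]| * #|V|)%N = #|U|.
Proof.
move=> fB fs.
have h := @fiber_count U V f [set: U]%SET [set: V]%SET #|[set u | f u == 0%R]| _ _ predT.
rewrite -[#|U|]cardsT -[#|V|]cardsT mulnC.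
have <- : [set x in [set: U]%SET | predT (f x)] = [set: U]%SET.
  by apply/setP => x; rewrite !inE.
have <- : [set x in [set: V]%SET | predT x] = [set: V]%SET.
  by apply/setP => x; rewrite !inE.
rewrite h //; first by rewrite mulnC.
move=> y _; have [u0 <-] := fs y; rewrite -(@fiber_add U V f fB u0).
by apply: eq_card => x; rewrite !inE.
Qed.

Lemma card_one_zero (T : finType) (q : nat) (S : {set T}) :
  #|[set g : {ffun T -> 'I_q.+1} | #|[set x in S | g x == ord0]| == 1%N]|
  = (#|S| * (q ^ #|S|.-1 * q.+1 ^ (#|T| - #|S|)))%N.
Proof.
set Z := fun g : {ffun T -> 'I_q.+1} => [set x in S | g x == ord0].
have step1 : #|[set g | #|Z g| == 1%N]| =
   (\sum_g #|[set x in S | Z g == [set x]]|)%N.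
  rewrite -sum1_card big_mkcond /=; apply: eq_bigr => g _; rewrite inE.
  case: cards1P => [[x0 Zx0]|nZ].
    have x0S : x0 \in S.
      have : x0 \in Z g by rewrite Zx0 set11.
      by rewrite inE => /andP[].
    rewrite -(cards1 x0); apply: eq_card => x; rewrite !inE Zx0.
    by rewrite (inj_eq set1_inj); apply/idP/andP => [/eqP ->|[_ /eqP ->]]; rewrite ?x0S.
  apply/esym/eqP; rewrite cards_eq0; apply/eqP/setP => x; rewrite !inE.
  by apply/negbTE/negP => /andP[_ /eqP h]; apply: nZ; exists x.
rewrite step1.
have step2 : (\sum_g #|[set x in S | Z g == [set x]]| =
   \sum_(x in S) #|[set g | Z g == [set x]]|)%N.
  rewrite (eq_bigr (fun g => (\sum_(x in S) nat_of_bool (Z g == [set x]))%N)); last first.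
    move=> g _; rewrite -sum1_card big_mkcond /= [in RHS]big_mkcond /=.
    by apply: eq_bigr => x _; rewrite inE; case: (x \in S); case: (Z g == _).
  rewrite exchange_big /=; apply: eq_bigr => x _.
  by rewrite -sum1_card [in RHS]big_mkcond /=; apply: eq_bigr => g _; rewrite inE; case: (Z g == _).
rewrite step2 -sum_nat_const; apply: eq_bigr => x xS.
pose F := fun y : T => if y == x then pred1 (@ord0 q) else if y \in S then predC1 (@ord0 q) else predT.
have -> : #|[set g | Z g == [set x]]| = #|(family F : simpl_pred _)|.
  apply: eq_card => g; rewrite inE; apply/eqP/familyP => [Zg y|Fg].
    have : (y \in Z g) = (y == x) by rewrite Zg inE.
    rewrite /F inE; case: (eqVneq y x) => [->|nyx]; first by rewrite xS /= inE => ->.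
    by case: (y \in S) => //= /negbT; rewrite !inE.
  apply/setP => y; rewrite !inE; have := Fg y; rewrite /F.
  case: eqP => [-> /= /eqP ->|_]; first by rewrite xS eqxx.
  by case: (y \in S) => //= /negbTE.
rewrite card_family foldrE big_map big_enum /=.
rewrite (bigD1 x) //=.
have -> : #|[eta F x]| = 1%N by rewrite /F eqxx; apply: card1.
rewrite mul1n (bigID (fun y => y \in S)) /=.
rewrite (eq_bigr (fun _ => q)); last first.
  by move=> y /andP[/negbTE yx yS]; rewrite /F yx yS cardC1 card_ord.
rewrite [X in (_ * X)%N](eq_bigr (fun _ => q.+1)); last first.
  by move=> y /andP[/negbTE yx /negbTE yS]; rewrite /F yx yS card_ord.
rewrite !prod_nat_const; congr (_ ^ _ * _ ^ _)%N.
  rewrite [in RHS](cardsD1 x S) xS add1n /=; apply: eq_card => y; rewrite !inE.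
  by [].
have -> : (#|T| - #|S| = #|~: S|)%N by rewrite [#|~: S|]cardsCs finset.setCK.
apply: eq_card => y; rewrite !inE.
rewrite unfold_in; by case: (eqVneq y x) => [->|]; rewrite ?xS ?andbT.
Qed.

Lemma ext_unit (F : fieldType) d N (M1 M2 : 'M[F]_(d, N)) :
  row_free M1 -> row_free M2 -> exists2 T, T \in unitmx & M1 *m T = M2.
Proof.
move=> f1 f2.
have dN : (d <= N)%N by rewrite -(eqP f1) rank_leq_col.
have e1 := mulmx_ebase M1; have e2 := mulmx_ebase M2.
rewrite (eqP f1) in e1; rewrite (eqP f2) in e2.
move: e1 e2 (col_ebase_unit M1) (col_ebase_unit M2) (row_ebase_unit M1) (row_ebase_unit M2).
move: (col_ebase M1) (col_ebase M2) (row_ebase M1) (row_ebase M2) => C1 C2 E1 E2.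
move=> e1 e2 uC1 uC2 uE1 uE2.
have [D uD eD] : exists2 D, D \in unitmx & C1 *m D = C2.
  exists (invmx C1 *m C2); first by rewrite unitmx_mul unitmx_inv uC1 uC2.
  by rewrite mulmxA mulmxV // mul1mx.
pose P : 'M[F]_(d, N) := pid_mx d.
have PPt : P *m P^T = 1%:M.
  by rewrite /P tr_pid_mx mul_pid_mx !minnn (minn_idPr dN) pid_mx_1.
have PtP : P^T *m P = pid_mx d.
  by rewrite /P tr_pid_mx mul_pid_mx !minnn.
have Pc : P *m copid_mx d = 0 by rewrite mul_pid_mx_copid.
have cPt : copid_mx d *m P^T = 0 by rewrite /P tr_pid_mx mul_copid_mx_pid.
have cc : copid_mx d *m copid_mx d = copid_mx d :> 'M[F]_N by rewrite copid_mx_id.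
have pc : pid_mx d + copid_mx d = 1%:M :> 'M[F]_N by rewrite /copid_mx addrC subrK.
move: (copid_mx d) Pc cPt cc pc => c Pc cPt cc pc.
pose S := P^T *m D *m P + c.
pose S' := P^T *m invmx D *m P + c.
have SS' : S *m S' = 1%:M.
  rewrite /S /S' mulmxDl !mulmxDr.
  have -> : P^T *m D *m P *m (P^T *m invmx D *m P) = pid_mx d.
    by rewrite -!mulmxA (mulmxA P) PPt mul1mx (mulmxA D) mulmxV // mul1mx PtP.
  have -> : P^T *m D *m P *m c = 0 by rewrite -mulmxA Pc mulmx0.
  have -> : c *m (P^T *m invmx D *m P) = 0 by rewrite !mulmxA cPt !mul0mx.
  by rewrite cc addr0 add0r.
have uS : S \in unitmx by case/mulmx1_unit: SS'.
exists (invmx E1 *m S *m E2).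
  by rewrite !unitmx_mul unitmx_inv uE1 uS uE2.
have PS : P *m S = D *m P.
  by rewrite /S mulmxDr Pc addr0 !mulmxA PPt mul1mx.
rewrite -e1 -e2 !mulmxA (mulmxK uE1); congr (_ *m _).
by rewrite -mulmxA PS mulmxA eD.
Qed.

Set Implicit Arguments. Unset Strict Implicit. Unset Printing Implicit Defensive.

Definition flat_of n d (p : F2vec n * 'M['F_2]_(d, n)) : {set F2vec n} :=
  [set p.1 + v *m p.2 | v : 'rV['F_2]_d].
Definition Par n d : {set F2vec n * 'M['F_2]_(d, n)} := [set p | row_free p.2].

Lemma set_in_true (T : finType) (A : {set T}) : [set x in A | true] = A.
Proof. by apply/setP => x; rewrite !inE andbT. Qed.

Lemma flat_of_affine n N d (T : 'M['F_2]_(n, N)) (c : F2vec N) (p : F2vec n * 'M['F_2]_(d, n)) :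
  flat_of (p.1 *m T + c, p.2 *m T) = [set y *m T + c | y in flat_of p].
Proof.
rewrite /flat_of -imset_comp; apply: eq_imset => v /=.
by rewrite mulmxDl mulmxA addrAC.
Qed.

Lemma flats_Par n d (Q : {set F2vec n}) :
  Q \in flats n d -> exists2 p, p \in Par n d & Q = flat_of p.
Proof.
rewrite inE => /existsP[x0 /existsP[M /andP[fM /eqP ->]]].
by exists (x0, M); rewrite ?inE.
Qed.

Lemma Par_flats n d p : p \in Par n d -> flat_of p \in flats n d.
Proof.
rewrite !inE => fp; apply/existsP; exists p.1; apply/existsP; exists p.2.
by rewrite fp eqxx.
Qed.

Lemma rf_mulu d n N (M : 'M['F_2]_(d, n)) (T : 'M['F_2]_(n, N)) :
  row_free M -> row_free T -> row_free (M *m T).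
Proof. by move=> fM fT; rewrite /row_free mxrankMfree. Qed.

Lemma card_flat_meet n d p (A : {set F2vec n}) : p \in Par n d ->
  #|flat_of p :&: A| = #|[set v : 'rV['F_2]_d | p.1 + v *m p.2 \in A]|.
Proof.
rewrite inE => fp.
have -> : flat_of p :&: A = [set p.1 + v *m p.2 | v in [set v | p.1 + v *m p.2 \in A]].
  apply/setP => y; rewrite !inE; apply/andP/imsetP => [[/imsetP[v _ ->] yA]|[v]].
    by exists v; rewrite ?inE.
  by rewrite inE => vA ->; split=> //; apply/imsetP; exists v.
by rewrite card_imset // => v w /addrI; apply: row_free_inj.
Qed.

Lemma card_imset_meet (T U : finType) (f : T -> U) (Q : {set T}) (A : {set U}) :
  injective f -> #|f @: Q :&: A| = #|Q :&: f @^-1: A|.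
Proof.
move=> fi; have -> : f @: Q :&: A = f @: (Q :&: f @^-1: A).
  apply/setP => y; rewrite !inE; apply/andP/imsetP => [[/imsetP[x xQ ->] fA]|[x]].
    by exists x; rewrite ?inE ?xQ.
  by rewrite !inE => /andP[xQ fA] ->; split=> //; apply/imsetP; exists x.
by rewrite card_imset.
Qed.

Lemma Par_fiber n d (Q1 Q2 : {set F2vec n}) : Q1 \in flats n d -> Q2 \in flats n d ->
  (#|[set p in Par n d | flat_of p == Q1]| <= #|[set p in Par n d | flat_of p == Q2]|)%N.
Proof.
move=> /flats_Par[p1 P1 ->] /flats_Par[p2 P2 ->].
move: (P1) (P2); rewrite !inE => f1 f2.
have [T0 uT0 eT0] := ext_unit _ _ _ _ _ f1 f2.
have fT0 : row_free T0 by rewrite row_free_unit.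
pose h (p : F2vec n * 'M['F_2]_(d, n)) := (p.1 *m T0 + (p2.1 - p1.1 *m T0), p.2 *m T0).
have hi : injective h.
  move=> [a M] [b M'] [/addIr e1 e2]; congr (_, _); exact: (row_free_inj fT0).
rewrite -(card_imset _ hi); apply: subset_leq_card; apply/fintype.subsetP => y.
move=> /imsetP[p]; rewrite !inE => /andP[fp /eqP ep] ->.
rewrite rf_mulu //=; rewrite /h flat_of_affine ep -flat_of_affine /=.
by rewrite addrCA subrr addr0 eT0 -surjective_pairing.
Qed.

Lemma lam_param (R : realType) n d s (A : {set F2vec n}) :
  lam R d s A = #|[set p in Par n d | #|flat_of p :&: A| == s]|%:R / #|Par n d|%:R.
Proof.
have [K hK] := @fiber_count_const _ _ (@flat_of n d) (Par n d) (flats n d)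
   (@Par_fiber n d) (@Par_flats n d).
have hT := hK predT; rewrite /= !set_in_true in hT.
rewrite /lam (hK (fun Q => #|Q :&: A| == s)) hT.
have [F0|Fpos] := eqVneq #|flats n d| 0%N.
  by rewrite F0 muln0 !invr0 !mulr0.
have Kp : K != 0%N.
  apply/eqP => K0; move: Fpos; rewrite -lt0n => /card_gt0P[Q QF].
  have [p pP _] := flats_Par QF.
  by move: hT; rewrite K0 mul0n => /eqP; rewrite cards_eq0 => /eqP P0; rewrite P0 inE in pP.
by rewrite !natrM -mulf_div divff ?mul1r // pnatr_eq0.
Qed.

Lemma lam_le_star (R : realType) n d s (A : {set F2vec n}) : lam R d s A <= lamstar_n R n d s.
Proof. by rewrite /lamstar_n (bigD1 A) //= le_max lexx. Qed.

Lemma lamstar_ge0 (R : realType) n d s : 0 <= lamstar_n R n d s.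
Proof.
rewrite /lamstar_n; elim/big_rec: _ => [|A x _ hx]; first by [].
by rewrite le_max hx orbT.
Qed.

Lemma lamstar_le (R : realType) n d s (c : R) :
  (forall A : {set F2vec n}, lam R d s A <= c) -> 0 <= c -> lamstar_n R n d s <= c.
Proof.
move=> hA c0; rewrite /lamstar_n; elim/big_rec: _ => [|A x _ hx]; first by [].
by rewrite ge_max hA hx.
Qed.

Lemma card_pair (A B : finType) (SA : {set A}) (Q : A -> B -> bool) :
  #|[set q : A * B | (q.1 \in SA) && Q q.1 q.2]| = (\sum_(a in SA) #|[set b | Q a b]|)%N.
Proof.
rewrite -sum1_card (eq_bigr (fun a => \sum_(b | Q a b) 1)%N); last first.
  by move=> a _; rewrite -sum1_card; apply: eq_bigl => b; rewrite inE.
by rewrite pair_big_dep /=; apply: eq_bigl => q; rewrite inE.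
Qed.

Lemma Par_pos n d : (d <= n)%N -> (0 < #|Par n d|)%N.
Proof.
move=> dn; apply/card_gt0P; exists (0, pid_mx d); rewrite inE /row_free /=.
by rewrite rank_pid_mx.
Qed.

Lemma lam_count_le (R : realType) n d s (A : {set F2vec n}) : (d <= n)%N ->
  #|[set p in Par n d | #|flat_of p :&: A| == s]|%:R <= lamstar_n R n d s * #|Par n d|%:R.
Proof.
move=> dn; have Tp : (0 : R) < #|Par n d|%:R by rewrite ltr0n Par_pos.
by rewrite -ler_pdivrMr // -lam_param lam_le_star.
Qed.

Lemma lamstar_mono (R : realType) n d s : (d <= n)%N ->
  lamstar_n R n.+1 d s <= lamstar_n R n d s.
Proof.
move=> dn; apply: lamstar_le; last exact: lamstar_ge0.
move=> A; rewrite lam_param.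
pose N := n.+1.
pose J : 'M['F_2]_(n, N) := pid_mx n.
have fJ : row_free J by rewrite /row_free rank_pid_mx.
pose X := ((F2vec N * 'M['F_2]_N) * (F2vec n * 'M['F_2]_(d, n)))%type.
pose f (q : X) : F2vec N * 'M['F_2]_(d, N) :=
  (q.2.1 *m (J *m q.1.2) + q.1.1, q.2.2 *m (J *m q.1.2)).
pose U : {set F2vec N * 'M['F_2]_N} := [set a | a.2 \in unitmx].
pose XS : {set X} := [set q : X | (q.1 \in U) && (q.2 \in Par n d)].
have fXS : forall q, q \in XS -> f q \in Par N d.
  move=> q; rewrite !inE => /andP[uT fM]; rewrite /f /= rf_mulu // rf_mulu //.
  by rewrite row_free_unit.
have fib : forall y1 y2, y1 \in Par N d -> y2 \in Par N d ->
    (#|[set q in XS | f q == y1]| <= #|[set q in XS | f q == y2]|)%N.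
  move=> y1 y2; rewrite !inE => f1 f2.
  have [T0 uT0 eT0] := ext_unit _ _ _ _ _ f1 f2.
  have fT0 : row_free T0 by rewrite row_free_unit.
  pose h (q : X) : X := ((q.1.1 *m T0 + (y2.1 - y1.1 *m T0), q.1.2 *m T0), q.2).
  have hi : injective h.
    move=> [[c T] p] [[c' T'] p'] [/addIr e1 e2 ->]; congr ((_, _), _).
      exact: (row_free_inj fT0).
    exact: (row_free_inj fT0).
  rewrite -(card_imset _ hi); apply: subset_leq_card; apply/fintype.subsetP => y.
  move=> /imsetP[q]; rewrite !inE => /andP[/andP[uq Pq] /eqP eq] ->.
  rewrite /h /= unitmx_mul uq uT0 Pq /=.
  clear hi; rewrite {h}; move: eq; rewrite /f; case: y1 {f1} eT0 => z1 M1 /= eT0 [e1 e2].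
  rewrite !mulmxA -(mulmxA q.2.1) -(mulmxA q.2.2) e2 eT0.
  by rewrite addrA -mulmxDl e1 addrCA subrr addr0 -surjective_pairing.

have [K hK] := fiber_count_const _ _ _ _ _ fib fXS.
have hT := hK predT; rewrite /= !set_in_true in hT.
have hC := hK (fun y => #|flat_of y :&: A| == s).
have split : forall P : F2vec N * 'M['F_2]_(d, N) -> bool,
    #|[set q in XS | P (f q)]| =
    (\sum_(a in U) #|[set p | (p \in Par n d) && P (f (a, p))]|)%N.
  move=> P; rewrite -card_pair; apply: eq_card => q; rewrite !inE.
  by rewrite -andbA -surjective_pairing.
have Upos : (0 < #|U|)%N by apply/card_gt0P; exists (0, 1%:M); rewrite inE unitmx1.
have hT' := split predT; rewrite /= set_in_true hT in hT'.
have eU : (K * #|Par N d|)%N = (#|U| * #|Par n d|)%N.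
  rewrite hT' -sum_nat_const; apply: eq_bigr => a _.
  by apply: eq_card => p; rewrite !inE andbT.
have Tpos : (0 < K * #|Par N d|)%N by rewrite eU muln_gt0 Upos Par_pos.
have hC' := split (fun y => #|flat_of y :&: A| == s); rewrite hC in hC'.
have Kp : (0 < K)%N by move: Tpos; rewrite muln_gt0 => /andP[].
have bnd : ((K * #|[set p in Par N d | #|flat_of p :&: A| == s]|)%N%:R : R)
    <= lamstar_n R n d s * (#|U| * #|Par n d|)%N%:R.
  rewrite hC' natr_sum natrM mulrCA mulr_natl -sumr_const; apply: ler_sum => a aU.
  move: aU; rewrite inE => ua.
  have fa : row_free (J *m a.2) by rewrite rf_mulu // row_free_unit.
  pose phi (y : F2vec n) := y *m (J *m a.2) + a.1.
  have phii : injective phi by move=> y y' /addIr; apply: row_free_inj.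
  apply: le_trans (lam_count_le R s (phi @^-1: A) dn).
  rewrite ler_nat; apply: eq_leq; apply: eq_card => p; rewrite !inE.
  case: (row_free p.2) => //=.
  by rewrite /f /= flat_of_affine card_imset_meet.
have TNp : (0 : R) < #|Par N d|%:R.
  by rewrite ltr0n; move: Tpos; rewrite muln_gt0 => /andP[].
rewrite ler_pdivrMr // -(@ler_pM2l _ K%:R) ?ltr0n // -natrM.
by rewrite mulrCA -natrM eU.
Qed.

Lemma card_rV n : #|'rV['F_2]_n| = (2 ^ n)%N.
Proof. by rewrite card_mx card_Fp // mul1n. Qed.

Lemma fiber_rowfull a b (X : 'M['F_2]_(a, b)) (w : 'rV['F_2]_b) : row_full X ->
  (#|[set v : 'rV['F_2]_a | v *m X == w]| * 2 ^ b)%N = (2 ^ a)%N.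
Proof.
case/row_fullP => Bi hB.
have fB : forall u v : 'rV['F_2]_a, u *m X - v *m X = (u - v) *m X.
  by move=> u v; rewrite mulmxBl.
have fB' : forall u v : 'rV['F_2]_a, (u - v) *m X = u *m X - v *m X by move=> u v; rewrite fB.
have surj : forall w' : 'rV['F_2]_b, exists u, u *m X = w'.
  by move=> w'; exists (w' *m Bi); rewrite -mulmxA hB mulmx1.
have := @ker_card _ _ (fun u : 'rV['F_2]_a => u *m X) fB' surj.
rewrite !card_rV => <-; congr (_ * _)%N.
have := @fiber_add _ _ (fun u : 'rV['F_2]_a => u *m X) fB' (w *m Bi).
by rewrite /= -mulmxA hB mulmx1.
Qed.

Lemma card_preim_sum (T U : finType) (f : T -> U) (B : {set U}) :
  #|[set x | f x \in B]| = (\sum_(b in B) #|[set x | f x == b]|)%N.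
Proof.
rewrite -sum1_card (partition_big f (mem B)) /=; last by move=> x; rewrite inE.
apply: eq_bigr => b bB; rewrite -sum1_card; apply: eq_bigl => x; rewrite !inE.
by case: (eqVneq (f x) b) => [->|_]; rewrite ?bB ?andbF ?andbT.
Qed.

Lemma card_flat n d p : p \in Par n d -> #|flat_of p| = (2 ^ d)%N.
Proof.
rewrite inE => fp; rewrite card_imset ?card_rV //.
by move=> v w /addrI; apply: row_free_inj.
Qed.

Lemma good_count N d m (x : F2vec N) (M : 'M['F_2]_(d, N)) (L : 'M['F_2]_(N, m))
   (B : {set 'rV['F_2]_m}) : row_free M -> row_full (M *m L) ->
  (#|flat_of (x, M) :&: [set y | y *m L \in B]| * 2 ^ m)%N = (#|B| * 2 ^ d)%N.
Proof.
move=> fM fX.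
rewrite card_flat_meet ?inE //=.
have -> : [set v : 'rV_d | x + v *m M \in [set y | y *m L \in B]] =
          [set v : 'rV_d | x *m L + v *m (M *m L) \in B].
  by apply/setP => v; rewrite !inE mulmxDl mulmxA.
rewrite card_preim_sum big_distrl /= -sum_nat_const; apply: eq_bigr => b _.
rewrite -(fiber_rowfull (b - x *m L) fX); congr (_ * _)%N.
by apply: eq_card => v; rewrite !inE; apply/eqP/eqP => h; [rewrite -h addrAC subrr add0r | rewrite h addrC subrK].
Qed.

Lemma F2_nz1 (a : 'F_2) : a != 0 -> a = 1.
Proof. by case: a => [[|[|]]] //= ? _; apply/val_inj. Qed.

Lemma bad_count N d m (M : 'M['F_2]_(d, N)) : row_free M ->
  (#|[set L : 'M['F_2]_(N, m) | ~~ row_full (M *m L)]| * 2 ^ d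
     <= (2 ^ m - 1) * 2 ^ (N * m))%N.
Proof.
move=> fM.
have [Mi hMi] := row_freeP fM.
pose S (r : 'rV['F_2]_m) := [set L : 'M['F_2]_(N, m) | M *m L *m r^T == 0].
have hS : forall r : 'rV['F_2]_m, r != 0 -> (#|S r| * 2 ^ d)%N = (2 ^ (N * m))%N.
  move=> r rnz.
  have [i ri] : exists i, r 0 i != 0.
    apply/existsP; apply: contraR rnz => /existsPn h; apply/eqP/matrixP => a b.
    by rewrite ord1 mxE; apply/eqP; rewrite (negbNE (h b)).
  have fB : forall u v : 'M['F_2]_(N, m), M *m (u - v) *m r^T = M *m u *m r^T - M *m v *m r^T.
    by move=> u v; rewrite mulmxBr mulmxBl.
  have surj : forall y : 'cV['F_2]_d, exists u, M *m u *m r^T = y.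
    move=> y; exists (Mi *m y *m delta_mx 0 i).
    rewrite !mulmxA hMi mul1mx -mulmxA.
    have -> : delta_mx 0 i *m r^T = 1%:M.
      apply/matrixP => a b; rewrite !ord1 !mxE (bigD1 i) //= big1 ?addr0.
        by rewrite !mxE !eqxx mul1r (F2_nz1 ri).
      by move=> l /negbTE li; rewrite !mxE li andbF mul0r.
    by rewrite mulmx1.
  have := @ker_card _ _ (fun u : 'M['F_2]_(N, m) => M *m u *m r^T) fB surj.
  by rewrite card_mx card_Fp // muln1 card_mx card_Fp.
have step : forall L : 'M['F_2]_(N, m), ~~ row_full (M *m L) ->
    exists2 r : 'rV['F_2]_m, r != 0 & L \in S r.
  move=> L nf.
  have nK : kermx (M *m L)^T != 0.
    by rewrite kermx_eq0 /row_free mxrank_tr.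
  have [i ri] : exists i, row i (kermx (M *m L)^T) != 0.
    apply/existsP; apply: contraR nK => /existsPn h; apply/eqP/row_matrixP => a.
    by rewrite row0; apply/eqP; rewrite (negbNE (h a)).
  exists (row i (kermx (M *m L)^T)) => //.
  rewrite inE; apply/eqP.
  have h := congr1 (row i) (mulmx_ker ((M *m L)^T)); rewrite row_mul row0 in h.
  by rewrite -(trmxK (M *m L *m _)) trmx_mul trmxK h trmx0.

rewrite -sum1_card big_mkcond /=.
apply: (@leq_trans ((\sum_(L : 'M['F_2]_(N, m)) \sum_(r : 'rV['F_2]_m | r != 0%R) nat_of_bool (L \in S r)) * 2 ^ d)%N).
  rewrite leq_mul2r; apply/orP; right; apply: leq_sum => L _; rewrite inE.
  case nf: (~~ row_full (M *m L)) => //.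
  have [r rnz rS] := step L nf.
  by rewrite (bigD1 r) //= rS.
rewrite exchange_big /= big_distrl /=.
apply: (@leq_trans (\sum_(r : 'rV['F_2]_m | r != 0%R) 2 ^ (N * m))%N).
  apply: leq_sum => r rnz; rewrite -(hS r rnz) leq_mul2r; apply/orP; right.
  by rewrite -sum1_card [in X in (_ <= X)%N]big_mkcond /=; apply: leq_sum => L _; case: (L \in S r).
rewrite sum_nat_const; apply: leq_mul => //.
rewrite subn1; have := cardC1 (0 : 'rV['F_2]_m); rewrite card_rV => <-.
by apply: subset_leq_card; apply/fintype.subsetP => r; rewrite !inE.
Qed.

Lemma avg_bound (R : realType) N d t (Fam : finType) (A : Fam -> {set F2vec N}) (c : R) :
  (0 < #|Fam|)%N -> (d <= N)%N ->
  (forall p, p \in Par N d -> c * #|Fam|%:R <= #|[set a | #|flat_of p :&: A a| == t]|%:R) ->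
  c <= lamstar_n R N d t.
Proof.
move=> Fp dN hp.
have Tp : (0 : R) < #|Par N d|%:R by rewrite ltr0n Par_pos.
have Fp' : (0 : R) < #|Fam|%:R by rewrite ltr0n.
have h1 : \sum_(a : Fam) lam R d t (A a) <= #|Fam|%:R * lamstar_n R N d t.
  rewrite mulr_natl -sumr_const; apply: ler_sum => a _; exact: lam_le_star.
have h2 : (\sum_(a : Fam) lam R d t (A a)) * #|Par N d|%:R =
   (\sum_(p in Par N d) #|[set a | #|flat_of p :&: A a| == t]|)%N%:R.
  have Tn0 : (#|Par N d|%:R : R) != 0 by rewrite gt_eqF.
  have -> : (\sum_(a : Fam) lam R d t (A a)) * #|Par N d|%:R =
     (\sum_(a : Fam) #|[set p in Par N d | #|flat_of p :&: A a| == t]|)%N%:R.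
    rewrite mulr_suml natr_sum; apply: eq_bigr => a _.
    by rewrite lam_param mulfVK.
  congr (_%:R).
  rewrite (eq_bigr (fun a => \sum_(p in Par N d) nat_of_bool (#|flat_of p :&: A a| == t)))%N; last first.
    by move=> a _; rewrite -sum1_card big_mkcond /= [in RHS]big_mkcond /=; apply: eq_bigr => p _; rewrite inE; case: (p \in Par N d); case: (_ == t).
  rewrite exchange_big /=; apply: eq_bigr => p _.
  by rewrite -sum1_card [in RHS]big_mkcond /=; apply: eq_bigr => a _; rewrite inE; case: (_ == t).
have h3 : c * #|Fam|%:R * #|Par N d|%:R <= (\sum_(p in Par N d) #|[set a | #|flat_of p :&: A a| == t]|)%N%:R.
  rewrite natr_sum mulr_natr -sumr_const; apply: ler_sum => p pP; exact: hp.
rewrite -(@ler_pM2r _ #|Fam|%:R) // [X in _ <= X]mulrC.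
rewrite -(@ler_pM2r _ #|Par N d|%:R) //; apply: le_trans h3 _.
by rewrite -h2 ler_pM2r.
Qed.

Lemma e_bound (R : realType) (q : nat) : (q.+1%:R : R) ^+ q <= expR 1 * q%:R ^+ q.
Proof.
have e1 : (1 : R) <= expR 1.
  by apply: le_trans (expR_ge1Dx 1); rewrite lerDl.
case: q => [|q]; first by rewrite !expr0 mulr1.
have qp : (0 : R) < q.+1%:R by rewrite ltr0n.
have -> : (q.+2%:R : R) = q.+1%:R * (1 + q.+1%:R^-1).
  by rewrite mulrDr mulr1 mulfV ?gt_eqF // -natr1.
rewrite exprMn mulrC ler_pM2r ?exprn_gt0 //.
apply: le_trans (_ : expR (q.+1%:R^-1) ^+ q.+1 <= _).
  apply: lerXn2r; rewrite ?nnegrE ?addr_ge0 ?invr_ge0 ?ler0n ?expR_ge0 //.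
  exact: expR_ge1Dx.
by rewrite -expRM_natl mulfV ?gt_eqF.
Qed.

Lemma per_param_count N d m q (t : nat)
  (Ag : 'M['F_2]_(N, m) -> {ffun F2vec N -> 'I_q.+1} -> {set F2vec N})
  (S : 'M['F_2]_(N, m) -> {set F2vec N}) (p : F2vec N * 'M['F_2]_(d, N)) :
  (forall L, row_full (p.2 *m L) ->
     #|S L| = q.+1 /\ forall g : {ffun F2vec N -> 'I_q.+1}, #|[set y in S L | g y == ord0]| == 1%N ->
       #|flat_of p :&: Ag L g| == t) ->
  (#|[set L : 'M['F_2]_(N, m) | row_full (p.2 *m L)]| *
     (q.+1 * (q ^ q * q.+1 ^ (2 ^ N - q.+1)))
   <= #|[set a : 'M['F_2]_(N, m) * {ffun F2vec N -> 'I_q.+1} |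
          #|flat_of p :&: Ag a.1 a.2| == t]|)%N.
Proof.
move=> hS.
pose G := [set L : 'M['F_2]_(N, m) | row_full (p.2 *m L)].
apply: (@leq_trans #|[set a : 'M['F_2]_(N, m) * {ffun F2vec N -> 'I_q.+1} |
    (a.1 \in G) && (#|[set y in S a.1 | a.2 y == ord0]| == 1%N)]|); last first.
  apply: subset_leq_card; apply/fintype.subsetP => a; rewrite !inE => /andP[fL h].
  by have [_ ->] := hS _ fL.
rewrite (@card_pair _ _ G (fun L (g : {ffun F2vec N -> 'I_q.+1}) => #|[set y in S L | g y == ord0]| == 1%N)) -sum_nat_const; apply: eq_leq; apply: eq_bigr => L.
rewrite inE => fL; have [cS _] := hS _ fL.
by rewrite card_one_zero cS card_rV.
Qed.

Lemma lower_main (R : realType) N d m k q (t : nat)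
  (Ag : 'M['F_2]_(N, m) -> {ffun F2vec N -> 'I_q.+1} -> {set F2vec N})
  (Sg : F2vec N * 'M['F_2]_(d, N) -> 'M['F_2]_(N, m) -> {set F2vec N}) :
  d = (m + k)%N -> (d <= N)%N -> (q.+1 <= 2 ^ N)%N ->
  (forall p L, p \in Par N d -> row_full (p.2 *m L) ->
     #|Sg p L| = q.+1 /\ forall g : {ffun F2vec N -> 'I_q.+1}, #|[set y in Sg p L | g y == ord0]| == 1%N ->
       #|flat_of p :&: Ag L g| == t) ->
  (expR (1 : R))^-1 * (1 - (2 : R) ^- k) <= lamstar_n R N d t.
Proof.
move=> dmk dN qN hS.
pose Fam : finType := ('M['F_2]_(N, m) * {ffun F2vec N -> 'I_q.+1})%type.
have cF : #|Fam| = (2 ^ (N * m) * q.+1 ^ (2 ^ N))%N.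
  by rewrite card_prod card_ffun card_ord card_rV card_mx card_Fp.
apply: (@avg_bound R N d t Fam (fun a => Ag a.1 a.2)) => //.
  by rewrite cF muln_gt0 expn_gt0 /= expn_gt0.
move=> p pP.
have fM : row_free p.2 by move: pP; rewrite inE.
have hc := @per_param_count N d m q t Ag (Sg p) p (fun L fL => hS p L pP fL).
apply: (@le_trans _ _ ((#|[set L : 'M['F_2]_(N, m) | row_full (p.2 *m L)]| * (q.+1 * (q ^ q * q.+1 ^ (2 ^ N - q.+1))))%N%:R)); last by rewrite ler_nat.
set G := #|[set L | row_full (p.2 *m L)]|.
have hb := @bad_count N d m p.2 fM.
set Bd := #|[set L | ~~ row_full (p.2 *m L)]| in hb.
have GB : (G + Bd)%N = (2 ^ (N * m))%N.
  have -> : (2 ^ (N * m))%N = #|{: 'M['F_2]_(N, m)}| by rewrite card_mx card_Fp.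
  rewrite -(cardsC [set L : 'M['F_2]_(N, m) | row_full (p.2 *m L)]) /G /Bd.
  by congr (_ + _)%N; apply: eq_card => L; rewrite !inE.
rewrite cF.
have e2k : (0 : R) < 2 ^+ k by rewrite exprn_gt0.
have hBd : (Bd%:R : R) <= (2 ^ (N * m))%N%:R * 2 ^- k.
  have h1 : (Bd * 2 ^ k * 2 ^ m <= 2 ^ (N * m) * 2 ^ m)%N.
    rewrite -mulnA -expnD addnC -dmk [X in (_ <= X)%N]mulnC; apply: leq_trans hb _.
    by rewrite leq_mul2r leq_subr orbT.
  rewrite leq_mul2r expn_eq0 /= in h1.
  rewrite ler_pdivlMr //; move: h1; rewrite -(ler_nat R) natrM natrX.
  by [].
have hG : (1 - 2 ^- k) * (2 ^ (N * m))%N%:R <= (G%:R : R).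
  have : (G%:R : R) = (2 ^ (N * m))%N%:R - Bd%:R by rewrite -GB natrD addrK.
  move=> ->; rewrite mulrBl mul1r mulrC lerB //.
have he : (expR (1 : R))^-1 * q.+1%:R ^+ q <= q%:R ^+ q.
  by rewrite mulrC ler_pdivrMr ?expR_gt0 // mulrC e_bound.
have k1 : (0 : R) <= 1 - 2 ^- k.
  by rewrite subr_ge0 invf_le1 // exprn_ege1 // ler1n.
have -> : (2 ^ (N * m) * q.+1 ^ (2 ^ N))%N%:R =
   (2 ^ (N * m))%N%:R * (q.+1%:R ^+ q) * (q.+1 * q.+1 ^ (2 ^ N - q.+1))%N%:R :> R.
  rewrite -natrX -!natrM; congr (_%:R); rewrite -mulnA; congr (_ * _)%N.
  by rewrite mulnA -expnSr -expnD subnKC.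
have -> : (G * (q.+1 * (q ^ q * q.+1 ^ (2 ^ N - q.+1))))%N%:R =
    G%:R * (q%:R ^+ q * (q.+1 * q.+1 ^ (2 ^ N - q.+1))%N%:R) :> R.
  by rewrite -natrX -!natrM [(q.+1 * (_ * _))%N]mulnCA.
move: hG he k1; set a := (expR 1)^-1; set b := 1 - _; set P := _%:R; set Q := _ ^+ q.
set Z := (_ * _)%N%:R; set Gr := G%:R; set qq := _ ^+ q => hG he k1.
have -> : a * b * (P * Q * Z) = (b * P) * ((a * Q) * Z) by ring.
apply: ler_pM => //.
  by rewrite mulr_ge0 // /P ler0n.
  by rewrite mulr_ge0 // ?mulr_ge0 ?invr_ge0 ?expR_ge0 ?exprn_ge0 ?ler0n // /Z ler0n.
by apply: ler_wpM2r => //; rewrite /Z ler0n.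
Qed.

Lemma meetP_count N d m k j (B : {set 'rV['F_2]_m}) p (L : 'M['F_2]_(N, m)) :
  d = (m + k)%N -> #|B| = j -> p \in Par N d -> row_full (p.2 *m L) ->
  #|flat_of p :&: [set y | y *m L \in B]| = (j * 2 ^ k)%N.
Proof.
move=> dmk cB pP fL.
have fM : row_free p.2 by move: pP; rewrite inE.
have e : (2 ^ d = 2 ^ k * 2 ^ m)%N by rewrite dmk expnD mulnC.
have := good_count p.1 B fM fL; rewrite -surjective_pairing cB e.
rewrite mulnA => /eqP; rewrite eqn_mul2r expn_eq0 /=.
by move/eqP.
Qed.

Lemma lower_plus (R : realType) N d m k j (B : {set 'rV['F_2]_m}) :
  d = (m + k)%N -> #|B| = j -> (d <= N)%N -> (j * 2 ^ k < 2 ^ d)%N ->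
  (expR (1 : R))^-1 * (1 - (2 : R) ^- k) <= lamstar_n R N d (j * 2 ^ k).+1.
Proof.
move=> dmk cB dN sd.
set s := (j * 2 ^ k)%N in sd *.
pose q := (2 ^ d - s).-1.
have q1 : q.+1 = (2 ^ d - s)%N by rewrite /q prednK // subn_gt0.
apply: (@lower_main R N d m k q s.+1
   (fun L g => [set y | (y *m L \in B) || (g y == ord0)])
   (fun p L => flat_of p :\: [set y | y *m L \in B])) => //.
  rewrite q1; apply: leq_trans (leq_subr _ _) _; rewrite leq_exp2l //.
move=> p L pP fL.
have hP := meetP_count dmk cB pP fL.
split.
  by rewrite cardsD hP card_flat.
move=> g /eqP h1.
rewrite -(cardsID [set y | y *m L \in B]).
have -> : flat_of p :&: [set y | (y *m L \in B) || (g y == ord0)] :&: [set y | y *m L \in B]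
    = flat_of p :&: [set y | y *m L \in B].
  by apply/setP => y; rewrite !inE; case: (y *m L \in B); rewrite ?andbF ?andbT.
rewrite hP; apply/eqP; rewrite -[(j * 2 ^ k).+1]addn1; congr (_ + _)%N; apply: (etrans _ h1).
apply: eq_card => y; rewrite !inE.
by case: (y *m L \in B); rewrite ?andbF ?andbT //= andbC.
Qed.

Lemma lower_minus (R : realType) N d m k j (B : {set 'rV['F_2]_m}) :
  d = (m + k)%N -> #|B| = j -> (d <= N)%N -> (0 < j * 2 ^ k)%N -> (j * 2 ^ k <= 2 ^ d)%N ->
  (expR (1 : R))^-1 * (1 - (2 : R) ^- k) <= lamstar_n R N d (j * 2 ^ k).-1.
Proof.
move=> dmk cB dN s0 sd.
set s := (j * 2 ^ k)%N in s0 sd *.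
pose q := s.-1.
have q1 : q.+1 = s by rewrite /q prednK.
apply: (@lower_main R N d m k q s.-1
   (fun L g => [set y | (y *m L \in B) && (g y != ord0)])
   (fun p L => flat_of p :&: [set y | y *m L \in B])) => //.
  rewrite q1; apply: leq_trans sd _; rewrite leq_exp2l //.
move=> p L pP fL.
have hP := meetP_count dmk cB pP fL.
split; first by rewrite hP.
move=> g /eqP h1.
have := cardsID [set y | (y *m L \in B) && (g y != ord0)] (flat_of p :&: [set y | y *m L \in B]).
rewrite hP -/s.
have -> : flat_of p :&: [set y | y *m L \in B] :&: [set y | (y *m L \in B) && (g y != ord0)]
    = flat_of p :&: [set y | (y *m L \in B) && (g y != ord0)].
  by apply/setP => y; rewrite !inE; case: (y *m L \in B); rewrite ?andbF ?andbT.
have -> : #|flat_of p :&: [set y | y *m L \in B] :\: [set y | (y *m L \in B) && (g y != ord0)]| = 1%N.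
  apply: (etrans _ h1); apply: eq_card => y; rewrite !inE.
  by case: (y *m L \in B); case: (g y == ord0); rewrite ?andbF ?andbT.
by move=> <-; rewrite addn1.
Qed.

Import numFieldNormedType.Exports.

Lemma lim_bound (R : realType) d t (c : R) :
  (forall N, (d <= N)%N -> c <= lamstar_n R N d t) -> c <= lamstar R d t.
Proof.
move=> H.
have ev : \forall n \near \oo%classic, c <= lamstar_n R n d t.
  by exists d => // n /= dn; apply: H.
rewrite /lamstar; set u := ((fun n => lamstar_n R n d t) : R^nat).
have cv : cvgn u.
  apply: (@near_nonincreasing_is_cvgn _ _ c) => //.
  exists d => // x /= dx y; elim: y => [|y IH]; first by rewrite leqn0 => /eqP ->.
  rewrite leq_eqVlt => /orP[/eqP ->//|]; rewrite ltnS => xy.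
  apply: le_trans (IH xy); rewrite /u; apply: lamstar_mono.
  exact: leq_trans dx xy.
by apply: limr_ge.
Qed.

Unset Implicit Arguments.

Theorem corollary1p6 (R : realType) (d s j k : nat) :
  (1 < d)%N -> (1 < s)%N -> (s < 2 ^ d)%N ->
  odd j -> (1 <= k)%N -> s = (j * 2 ^ k)%N ->
  (expR (1 : R))^-1 * (1 - (2 : R) ^- k) <= lamstar R d s.+1 /\
  (expR (1 : R))^-1 * (1 - (2 : R) ^- k) <= lamstar R d s.-1.
Proof.
move=> d1 s1 sd oj k1 sj.
have j0 : (0 < j)%N by case: j oj {sj}.
have kd : (k < d)%N.
  rewrite -(@ltn_exp2l 2) //; apply: leq_ltn_trans sd; rewrite sj.
  by rewrite leq_pmull.
pose m := (d - k)%N.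
have dmk : d = (m + k)%N by rewrite /m subnK // ltnW.
have jm : (j <= 2 ^ m)%N.
  have : (j * 2 ^ k < 2 ^ m * 2 ^ k)%N by rewrite -expnD -dmk -sj.
  by rewrite ltn_mul2r expn_gt0 /= => /ltnW.
pose B : {set 'rV['F_2]_m} := [set x in take j (enum 'rV['F_2]_m)].
have cB : #|B| = j.
  rewrite /B cardsE; have /card_uniqP -> := take_uniq j (enum_uniq (T:='rV['F_2]_m) predT).
  by rewrite size_takel // -cardE card_rV.
rewrite sj; split; apply: lim_bound => N dN.
  by have := @lower_plus R N _ _ _ _ _ dmk cB dN; apply; rewrite -sj.
have := @lower_minus R N _ _ _ _ _ dmk cB dN; apply; rewrite -sj //; first exact: ltn_trans s1.
exact: ltnW.
Qed.
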